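(* Let $T$ be a tree. No shortest path $(c_0,c_1,\dots,c_r)$ in $\mathcal{C}_3(T)$ contains a pair of opposite edges; that is, there are no indices $i\neq j$ and vertex $v$ such that both steps $c_i\to c_{i+1}$ and $c_j\to c_{j+1}$ change the color of $v$ and $c_{i+1}(v)-c_i(v)=-(c_{j+1}(v)-c_j(v))$ in $\mathbb{Z}/3\mathbb{Z}$.
   Context: Let $T$ be a finite tree with vertex set $V$ and edge set $E$. A proper 3-coloring of $T$ is a map $f\colon V\to\mathbb{Z}/3\mathbb{Z}$ with $f(u)\neq f(v)$ for every edge $uv\in E$. The 3-coloring graph $\mathcal{C}_3(T)$ has the proper 3-colorings as vertices, two colorings adjacent iff they differ at exactly one vertex. An edge $c\to c'$ of $\mathcal{C}_3(T)$ differing at $v$ changes the color of $v$ by $+1$ or by $-1$ in $\mathbb{Z}/3\mathbb{Z}$ (a $(+1)$-toggle or $(-1)$-toggle at $v$). *)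

(* Defs.v *)
From mathcomp Require Import all_boot all_order all_algebra.
Set Implicit Arguments. Unset Strict Implicit. Unset Printing Implicit Defensive.
Import GRing.Theory.


Definition simple_graph (V : finType) (e : rel V) : Prop :=
  (symmetric e) /\ (irreflexive e).

Definition is_tree (V : finType) (e : rel V) : Prop :=
  [/\ simple_graph e,
      (forall x y : V, connect e x y) &
      (forall p : seq V, uniq p -> (3 <= size p)%N -> ~~ cycle e p)].

Definition coloring (V : finType) := {ffun V -> 'Z_3}.

Definition proper3 (V : finType) (e : rel V) (f : coloring V) : bool :=
  [forall u, forall v, e u v ==> (f u != f v)].

Definition adjC3 (V : finType) (e : rel V) : rel (coloring V) :=
  fun c c' => [&& proper3 e c, proper3 e c' & #|[set v | c v != c' v]| == 1%N].

(* a walk (c_0, ..., c_r) in C_3(T) is given by its start c0 and the list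
   s = [:: c_1; ...; c_r]; every c_i is proper and consecutive ones are adjacent *)
Definition walkC3 (V : finType) (e : rel V) (c0 : coloring V) (s : seq (coloring V)) : bool :=
  proper3 e c0 && path (adjC3 e) c0 s.

Definition shortest_walkC3 (V : finType) (e : rel V) (c0 : coloring V)
    (s : seq (coloring V)) : Prop :=
  walkC3 e c0 s /\
  (forall s' : seq (coloring V), walkC3 e c0 s' -> last c0 s' = last c0 s ->
    (size s <= size s')%N).

Definition cwalk (V : finType) (c0 : coloring V) (s : seq (coloring V)) (i : nat) :
  coloring V := nth c0 (c0 :: s) i.

(* Main.v *)
Require Import Defs.
From mathcomp Require Import all_boot all_order all_algebra.
From mathcomp Require Import zify ring.
Import GRing.Theory Num.Theory Order.TTheory.
Set Implicit Arguments. Unset Strict Implicit. Unset Printing Implicit Defensive.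
Local Open Scope ring_scope.


Definition dz (a b : 'Z_3) : int := if b == a + 1 then 1 else -1.

Definition valid (V : finType) (e : rel V) (ct c : coloring V) (W : V -> int) : Prop :=
  (forall u v, e u v -> 2 * (W u - W v) = dz (ct v) (ct u) - dz (c v) (c u)) /\
  (forall v, ct v = c v - (W v)%:~R).

Ltac z3 := repeat match goal with a : 'Z_3 |- _ => revert a end;
  repeat (match goal with |- forall _ : 'Z_3, _ => let a := fresh in intro a; case: a => [[|[|[|?]]] ?] end); try done; try (intros; apply/eqP; done).

Lemma F1 (a b : 'Z_3) : a != b -> a != b + 1 -> a = b - 1.
Proof. z3. Qed.
Lemma F1' (a b : 'Z_3) : a != b -> a != b - 1 -> a = b + 1.
Proof. z3. Qed.
Lemma F2 (a b : 'Z_3) : a != b -> (a == b + 1) || (a == b - 1).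
Proof. z3. Qed.
Lemma F3 (a : 'Z_3) : [/\ (a == a + 1) = false, (a == a - 1) = false,
   (a + 1 == a - 1) = false & (a - 1 == a + 1) = false].
Proof. z3. Qed.
Lemma F4 (a b a' b' : 'Z_3) : a != b -> a' != b' -> b - a = -(b' - a') ->
  (b == a + 1) && (b' == a' - 1) || (b == a - 1) && (b' == a' + 1).
Proof. z3. Qed.
Lemma F5 (a b : 'Z_3) : addn (b == a + 1) (b == a - 1) = (a != b) :> nat.
Proof. z3. Qed.
Lemma dzU (b : 'Z_3) : [/\ dz b (b - 1) = -1, dz (b - 1) b = 1,
   dz (b + 1) (b - 1) = 1 & dz (b - 1) (b + 1) = -1].
Proof. z3. Qed.
Lemma dzD (b : 'Z_3) : [/\ dz b (b + 1) = 1, dz (b + 1) b = -1,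
   dz (b - 1) (b + 1) = -1 & dz (b + 1) (b - 1) = 1].
Proof. z3. Qed.
Lemma F6 (a : 'Z_3) : a + 1 != a - 1.
Proof. z3. Qed.
Lemma F7 (a : 'Z_3) : a != a + 1.
Proof. z3. Qed.
Lemma F8 (a : 'Z_3) : a != a - 1.
Proof. z3. Qed.

Lemma prop3P (V : finType) (e : rel V) c u v : proper3 e c -> e u v -> c u != c v.
Proof. by move/forallP/(_ u)/forallP/(_ v)/implyP. Qed.

Lemma t (a b c : int) : 2 * (a - b) = c - 1 -> 2 * (a + 1 - b) = c - -1.
Proof. lia. Qed.

Lemma t2 (a b : 'Z_3) (w : int) : a = b - w%:~R -> a = (b + 1) - (w + 1)%:~R.
Proof. move=> ->. rewrite intrD. ring. Qed.
Lemma F9 (a : 'Z_3) : (a == a + 1 + 1) = false /\ (a == a - 1 - 1) = false.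
Proof. z3. Qed.

Lemma toggle_up (V : finType) (e : rel V) ct c c' W W' v0 :
 irreflexive e -> symmetric e -> proper3 e c -> proper3 e c' ->
 c' v0 = c v0 + 1 -> (forall x, x != v0 -> c' x = c x) ->
 W' v0 = W v0 + 1 -> (forall x, x != v0 -> W' x = W x) ->
 valid e ct c W -> valid e ct c' W'.
Proof.
move=> irr sym pc pc' cv0 cx Wv0 Wx [HA HB].
have nb : forall u, e u v0 -> c u = c v0 - 1.
  move=> u euv; have uv : u != v0 by apply: contraTneq euv => ->; rewrite irr.
  apply: F1; first exact: prop3P pc euv.
  by rewrite -cv0 -(cx u uv); exact: prop3P pc' euv.
split.
- move=> u v euv; case: (eqVneq u v0) => [eu|uv0]; case: (eqVneq v v0) => [ev|vv0].
  + by move: euv; rewrite eu ev irr.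
  + subst u; have evv : e v v0 by rewrite sym.
    rewrite Wv0 (Wx v vv0) cv0 (cx v vv0) (nb v evv).
    have := HA v0 v euv; rewrite (nb v evv).
    case: (dzU (c v0)) => _ -> _ _; case: (dzD (c v0 - 1)) => _ _ _.
    have -> : dz (c v0 - 1) (c v0 + 1) = -1 by case: (dzU (c v0)).
    lia.
  + subst v; rewrite Wv0 (Wx u uv0) cv0 (cx u uv0) (nb u euv).
    have := HA u v0 euv; rewrite (nb u euv).
    case: (dzU (c v0)) => -> _ _ _.
    have -> : dz (c v0 + 1) (c v0 - 1) = 1 by case: (dzU (c v0)).
    lia.
  + by rewrite (Wx u uv0) (Wx v vv0) (cx u uv0) (cx v vv0); apply: HA.
- move=> x; case: (eqVneq x v0) => [->|xv0].
  + rewrite Wv0 cv0 HB intrD; ring.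
  + by rewrite (Wx x xv0) (cx x xv0).
Qed.

Lemma toggle_down (V : finType) (e : rel V) ct c c' W W' v0 :
 irreflexive e -> symmetric e -> proper3 e c -> proper3 e c' ->
 c' v0 = c v0 - 1 -> (forall x, x != v0 -> c' x = c x) ->
 W' v0 = W v0 - 1 -> (forall x, x != v0 -> W' x = W x) ->
 valid e ct c W -> valid e ct c' W'.
Proof.
move=> irr sym pc pc' cv0 cx Wv0 Wx [HA HB].
have nb : forall u, e u v0 -> c u = c v0 + 1.
  move=> u euv; have uv : u != v0 by apply: contraTneq euv => ->; rewrite irr.
  apply: F1'; first exact: prop3P pc euv.
  by rewrite -cv0 -(cx u uv); exact: prop3P pc' euv.
split.
- move=> u v euv; case: (eqVneq u v0) => [eu|uv0]; case: (eqVneq v v0) => [ev|vv0].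
  + by move: euv; rewrite eu ev irr.
  + subst u; have evv : e v v0 by rewrite sym.
    rewrite Wv0 (Wx v vv0) cv0 (cx v vv0) (nb v evv).
    have := HA v0 v euv; rewrite (nb v evv).
    case: (dzD (c v0)) => _ -> _ _.
    have -> : dz (c v0 + 1) (c v0 - 1) = 1 by case: (dzD (c v0)).
    lia.
  + subst v; rewrite Wv0 (Wx u uv0) cv0 (cx u uv0) (nb u euv).
    have := HA u v0 euv; rewrite (nb u euv).
    case: (dzD (c v0)) => -> _ _ _.
    have -> : dz (c v0 - 1) (c v0 + 1) = -1 by case: (dzD (c v0)).
    lia.
  + by rewrite (Wx u uv0) (Wx v vv0) (cx u uv0) (cx v vv0); apply: HA.
- move=> x; case: (eqVneq x v0) => [->|xv0].
  + rewrite Wv0 cv0 HB intrD; ring.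
  + by rewrite (Wx x xv0) (cx x xv0).
Qed.

Fixpoint steps (V : finType) (c : coloring V) (s : seq (coloring V)) :
  seq (coloring V * coloring V) :=
  if s is c' :: s' then (c, c') :: steps c' s' else [::].

Definition posc (V : finType) (v : V) (ps : seq (coloring V * coloring V)) : nat :=
  count (fun p : coloring V * coloring V => p.2 v == p.1 v + 1) ps.
Definition negc (V : finType) (v : V) (ps : seq (coloring V * coloring V)) : nat :=
  count (fun p : coloring V * coloring V => p.2 v == p.1 v - 1) ps.
Definition Wnet (V : finType) (c : coloring V) (s : seq (coloring V)) (v : V) : int :=
  (negc v (steps c s))%:Z - (posc v (steps c s))%:Z.

Lemma adj_one (V : finType) (e : rel V) c c' : adjC3 e c c' ->
  exists v0, [/\ c v0 != c' v0 & forall x, x != v0 -> c' x = c x].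
Proof.
case/and3P => _ _ /cards1P [v0 Hs]; exists v0; split.
  have : v0 \in [set v | c v != c' v] by rewrite Hs set11.
  by rewrite inE.
  move=> x xv; apply/eqP; rewrite eq_sym; apply/negPn/negP => H.
  have : x \in [set v | c v != c' v] by rewrite inE.
  by rewrite Hs inE (negbTE xv).
Qed.

Lemma walk_valid (V : finType) (e : rel V) : irreflexive e -> symmetric e ->
  forall s c, proper3 e c -> path (adjC3 e) c s -> valid e (last c s) c (Wnet c s).
Proof.
move=> irr sym; elim=> [|c' s IH] c pc /=.
  move=> _; split.
    by move=> u v _; rewrite /Wnet /= !subrr mulr0.
  by move=> v; rewrite /Wnet /= subrr subr0.
case/andP => hadj hp.
have pc' : proper3 e c' by case/and3P: hadj.
have := IH c' pc' hp.
have [v0 [ne cx]] := adj_one hadj.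
have [/eqP h|/eqP h] := orP (F2 ne).
-
  apply: (toggle_up irr sym pc' pc h).
  + by move=> x xv; rewrite cx.
  + rewrite /Wnet /= /posc /negc /=.
    rewrite h addrK eqxx (proj1 (F9 _)).
    lia.
  + move=> x xv; rewrite /Wnet /= /posc /negc /= (cx x xv).
    case: (F3 (c x)) => -> -> _ _; lia.
- apply: (toggle_down irr sym pc' pc h).
  + by move=> x xv; rewrite cx.
  + rewrite /Wnet /= /posc /negc /=.
    rewrite h subrK eqxx (proj2 (F9 _)).
    lia.
  + move=> x xv; rewrite /Wnet /= /posc /negc /= (cx x xv).
    case: (F3 (c x)) => -> -> _ _; lia.
Qed.

Lemma sum_cnt (V : finType) (e : rel V) : forall s c, path (adjC3 e) c s ->
  (\sum_v (posc v (steps c s) + negc v (steps c s)) = size s)%N.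
Proof.
elim=> [|c' s IH] c /=.
  by move=> _; rewrite big1.
case/andP => hadj hp.
rewrite -(IH c' hp).
rewrite (eq_bigr (fun v => ((c' v == c v + 1)%R + (c' v == c v - 1)%R)
   + (posc v (steps c' s) + negc v (steps c' s)))%N); last first.
  by move=> v _; rewrite /posc /negc /=; lia.
rewrite big_split /= -[RHS]add1n; congr (_ + _)%N.
rewrite (eq_bigr (fun v => (v \in [set v | c v != c' v]) : nat)); last first.
  by move=> v _; rewrite F5 inE.
case/and3P: hadj => _ _ /eqP H1; apply: eq_trans (H1).

rewrite -sum1_card [RHS]big_mkcond /=; apply: eq_bigr => v _.
by case: (_ \in _).
Qed.

Lemma count_nth (V : finType) (P : pred (coloring V * coloring V)) :
  forall s c k, (k < size s)%N -> P (nth c (c :: s) k, nth c (c :: s) k.+1) ->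
  (0 < count P (steps c s))%N.
Proof.
elim=> [|c' s IH] c [|k] //=.
  by move=> _ ->.
move=> ks Hp; have := IH c' k ks.
rewrite -(set_nth_default c' c (_ : k < size (c' :: s))%N) /=; last by apply: ltnW.
rewrite -(set_nth_default c' c (ks : (k < size s)%N)).
move=> H; have := H Hp; lia.
Qed.

Lemma last_proper (V : finType) (e : rel V) : forall s c, proper3 e c ->
  path (adjC3 e) c s -> proper3 e (last c s).
Proof.
elim=> [|c' s IH] c //= pc /andP [hadj hp].
by apply: IH hp; case/and3P: hadj.
Qed.

Lemma cyc_ex (V : finType) (R : rel V) : forall p x w, uniq (x :: p) -> path R x p ->
  w \in x :: p -> R (last x p) w -> exists y q, uniq (y :: q) /\ cycle R (y :: q).
Proof.
elim=> [|y p IH] x w.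
  by move=> _ _; rewrite inE => /eqP -> /= H; exists x, [::]; rewrite /= H.
move=> U P; rewrite inE; case: (eqVneq w x) => [->|wx] /= Hin HR.
  by exists x, (y :: p); split => //; rewrite /cycle rcons_path; apply/andP; split.
move: U P => /= /andP [_ U] /andP [_ P].
exact: (IH y w U P Hin HR).
Qed.

Lemma no_cycle (V : finType) (e R : rel V) y q : is_tree e -> subrel R e ->
  (forall x z, R x z -> ~~ R z x) -> uniq (y :: q) -> cycle R (y :: q) -> False.
Proof.
move=> [_ _ Htr] sub anti U C.
case: q U C => [|z [|z' q]] U C.
- by move: C => /= /andP [H _]; move: (anti _ _ H); rewrite H.
- by move: C => /= /and3P [H1 H2 _]; move: (anti _ _ H1); rewrite H2.
- have := Htr _ U isT; rewrite /cycle.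
  by move: C; rewrite /cycle => /(sub_path sub) ->.
Qed.

Lemma sink (V : finType) (e R : rel V) (S : {set V}) x0 : is_tree e -> subrel R e ->
  (forall x z, R x z -> ~~ R z x) -> x0 \in S ->
  exists2 v, v \in S & forall u, u \in S -> ~~ R v u.
Proof.
move=> Ht sub anti x0S.
case: (boolP [exists v in S, [forall u in S, ~~ R v u]]).
  by case/exists_inP => v vS /forall_inP H; exists v.
move/exists_inPn => H.
have H' : forall v, v \in S -> exists2 u, u \in S & R v u.
  by move=> v vS; have /forall_inPn [u uS /negPn Ru] := H v vS; exists u.
have grow : forall k, exists x p, [/\ uniq (x :: p), size p = k,
    all (fun y => y \in S) (x :: p) & path R x p].
  elim=> [|k [x [p [U Sz A P]]]].
    by exists x0, [::]; rewrite /= x0S.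
  have zS : last x p \in S by apply: (allP A); exact: mem_last.
  have [w wS Rw] := H' _ zS.
  case: (boolP (w \in x :: p)) => win.
    have [y [q [Uq Cq]]] := cyc_ex U P win Rw.
    by case: (no_cycle Ht sub anti Uq Cq).
  exists x, (rcons p w); split.
  - by rewrite -rcons_cons rcons_uniq win U.
  - by rewrite size_rcons Sz.
  - by rewrite -rcons_cons all_rcons wS A.
  - by rewrite rcons_path P Rw.
have [x [p [U Sz _ _]]] := grow #|V|.
have := max_card (mem (x :: p)).
by rewrite (card_uniqP U) /= Sz ltnn.
Qed.

Lemma dz_bnd (a b : 'Z_3) : -1 <= dz a b <= 1.
Proof. by rewrite /dz; case: ifP. Qed.

Lemma step_up (V : finType) (e : rel V) ct c W v n : irreflexive e -> symmetric e ->
  proper3 e c -> valid e ct c W -> W v < 0 -> (forall u, e v u -> c u != c v + 1) ->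
  (\sum_x absz (W x))%N = n.+1 ->
  exists c' W', [/\ adjC3 e c c', proper3 e c', valid e ct c' W'
                  & (\sum_x absz (W' x))%N = n].
Proof.
move=> irr sym pc [HA HB] Wv Hnb Hs.
set c' : coloring V := [ffun x => if x == v then c v + 1 else c x].
have c'v : c' v = c v + 1 by rewrite ffunE eqxx.
have c'x : forall x, x != v -> c' x = c x by move=> x xv; rewrite ffunE (negbTE xv).
have pc' : proper3 e c'.
  apply/forallP => x; apply/forallP => y; apply/implyP => exy.
  case: (eqVneq x v) => [ex|xv]; case: (eqVneq y v) => [ey|yv].
  - by move: exy; rewrite ex ey irr.
  - by subst x; rewrite c'v (c'x y yv) eq_sym; apply: Hnb.
  - by subst y; rewrite c'v (c'x x xv); apply: Hnb; rewrite sym.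
  - by rewrite (c'x x xv) (c'x y yv); exact: prop3P pc exy.
exists c', (fun x => if x == v then W x + 1 else W x); split => //.
- rewrite /adjC3 pc pc' /=.
  have -> : [set x | c x != c' x] = [set v].
    apply/setP => x; rewrite !inE; case: (eqVneq x v) => [->|xv].
      by rewrite c'v F7.
    by rewrite (c'x x xv) eqxx.
  by rewrite cards1.
- apply: (toggle_up irr sym pc pc' c'v c'x _ _ (conj HA HB)).
    by rewrite eqxx.
  by move=> x xv; rewrite (negbTE xv).
- rewrite (bigD1 v) //= in Hs; rewrite (bigD1 v) //= eqxx.
  rewrite (eq_bigr (fun x => absz (W x))); last by move=> x xv; rewrite (negbTE xv).
  lia.
Qed.

Lemma step_down (V : finType) (e : rel V) ct c W v n : irreflexive e -> symmetric e ->
  proper3 e c -> valid e ct c W -> 0 < W v -> (forall u, e v u -> c u != c v - 1) ->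
  (\sum_x absz (W x))%N = n.+1 ->
  exists c' W', [/\ adjC3 e c c', proper3 e c', valid e ct c' W'
                  & (\sum_x absz (W' x))%N = n].
Proof.
move=> irr sym pc [HA HB] Wv Hnb Hs.
set c' : coloring V := [ffun x => if x == v then c v - 1 else c x].
have c'v : c' v = c v - 1 by rewrite ffunE eqxx.
have c'x : forall x, x != v -> c' x = c x by move=> x xv; rewrite ffunE (negbTE xv).
have pc' : proper3 e c'.
  apply/forallP => x; apply/forallP => y; apply/implyP => exy.
  case: (eqVneq x v) => [ex|xv]; case: (eqVneq y v) => [ey|yv].
  - by move: exy; rewrite ex ey irr.
  - by subst x; rewrite c'v (c'x y yv) eq_sym; apply: Hnb.
  - by subst y; rewrite c'v (c'x x xv); apply: Hnb; rewrite sym.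
  - by rewrite (c'x x xv) (c'x y yv); exact: prop3P pc exy.
exists c', (fun x => if x == v then W x - 1 else W x); split => //.
- rewrite /adjC3 pc pc' /=.
  have -> : [set x | c x != c' x] = [set v].
    apply/setP => x; rewrite !inE; case: (eqVneq x v) => [->|xv].
      by rewrite c'v F8.
    by rewrite (c'x x xv) eqxx.
  by rewrite cards1.
- apply: (toggle_down irr sym pc pc' c'v c'x _ _ (conj HA HB)).
    by rewrite eqxx.
  by move=> x xv; rewrite (negbTE xv).
- rewrite (bigD1 v) //= in Hs; rewrite (bigD1 v) //= eqxx.
  rewrite (eq_bigr (fun x => absz (W x))); last by move=> x xv; rewrite (negbTE xv).
  lia.
Qed.

Lemma greedy (V : finType) (e : rel V) ct : is_tree e -> proper3 e ct ->
  forall n c W, proper3 e c -> valid e ct c W -> (\sum_x absz (W x))%N = n ->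
  exists s, [/\ path (adjC3 e) c s, last c s = ct & size s = n].
Proof.
move=> Ht pct; have [[sym irr] _ _] := Ht.
elim=> [|n IH] c W pc [HA HB] Hs.
  exists [::]; split => //=; apply/ffunP => v; rewrite HB.
  move/eqP: Hs; rewrite sum_nat_eq0 => /forallP/(_ v)/eqP H.
  have -> : W v = 0 by lia.
  by rewrite subr0.
have [x0 _] : exists x0 : V, true.
  case: (pickP (@predT V)) => [x0 _|H]; first by exists x0.
  by move: Hs; rewrite big_pred0.
case: (arg_minP W (isT : predT x0)) => vm _ Hvm.
have cont : (exists c' W', [/\ adjC3 e c c', proper3 e c', valid e ct c' W'
                  & (\sum_x absz (W' x))%N = n]) ->
     exists s, [/\ path (adjC3 e) c s, last c s = ct & size s = n.+1].
  move=> [c' [W' [ad pc' v' s']]].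
  have [s [p l z]] := IH c' W' pc' v' s'.
  by exists (c' :: s); rewrite /= ad p l z.
case: (ltrP (W vm) 0) => Wvm.
- pose S := [set x | W x == W vm].
  pose R := [rel x y | e x y && (c y == c x + 1)].
  have sub : subrel R e by move=> x y /andP [].
  have anti : forall x y, R x y -> ~~ R y x.
    move=> x y /andP [_ /eqP H]; by rewrite /= H (proj1 (F9 _)) andbF.
  have vmS : vm \in S by rewrite inE.
  have [v vS Hv] := sink Ht sub anti vmS.
  apply: cont; apply: (@step_up _ _ _ _ _ v _ irr sym pc (conj HA HB) _ _ Hs).
    by move: vS; rewrite inE => /eqP ->.
  move=> u evu; case: (boolP (u \in S)) => uS.
    by have := Hv u uS; rewrite /= evu.
  apply/negP => E.
  have h1 := Hvm u isT.
  move: uS vS; rewrite !inE => uS /eqP vS.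
  have evu' : e u v by rewrite sym.
  have := HA u v evu'; rewrite {2}/dz E.
  have := dz_bnd (ct v) (ct u).
  lia.
have [x1 Hx1] : exists x, W x != 0.
  case: (boolP [exists x, W x != 0]) => [/existsP //|/existsPn H].
  move: Hs; rewrite big1 // => x _; have := H x; rewrite negbK => /eqP ->.
  by [].
case: (arg_maxP W (isT : predT x0)) => vM _ HvM.
have WvM : 0 < W vM by have := HvM x1 isT; have := Hvm x1 isT; lia.
pose S := [set x | W x == W vM].
pose R := [rel x y | e x y && (c y == c x - 1)].
have sub : subrel R e by move=> x y /andP [].
have anti : forall x y, R x y -> ~~ R y x.
  move=> x y /andP [_ /eqP H]; by rewrite /= H (proj2 (F9 _)) andbF.
have vMS : vM \in S by rewrite inE.
have [v vS Hv] := sink Ht sub anti vMS.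
apply: cont; apply: (@step_down _ _ _ _ _ v _ irr sym pc (conj HA HB) _ _ Hs).
  by move: vS; rewrite inE => /eqP ->.
move=> u evu; case: (boolP (u \in S)) => uS.
  by have := Hv u uS; rewrite /= evu.
apply/negP => /eqP E.
have h1 := HvM u isT.
move: uS vS; rewrite !inE => uS /eqP vS.
have evu' : e u v by rewrite sym.
have [_ _ _ F34] := F3 (c v).
have := HA u v evu'; rewrite {2}/dz E F34.
have := dz_bnd (ct v) (ct u).
lia.
Qed.

Lemma lower (V : finType) (e : rel V) c0 s v : path (adjC3 e) c0 s ->
  (0 < posc v (steps c0 s))%N -> (0 < negc v (steps c0 s))%N ->
  (\sum_x absz (Wnet c0 s x) + 2 <= size s)%N.
Proof.
move=> hp hpos hneg; rewrite -(sum_cnt hp).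
rewrite (bigD1 v) //= [X in (_ <= X)%N](bigD1 v) //=.
have : (\sum_(x | x != v) absz (Wnet c0 s x) <=
        \sum_(x | x != v) (posc x (steps c0 s) + negc x (steps c0 s)))%N.
  by apply: leq_sum => x _; rewrite /Wnet; lia.
rewrite /Wnet; lia.
Qed.

Unset Implicit Arguments.
Theorem mainTheorem4 (V : finType) (e : rel V) (c0 : coloring V)
    (s : seq (coloring V)) :
  is_tree e ->
  shortest_walkC3 e c0 s ->
  ~ (exists (i j : nat) (v : V),
       [/\ i != j, (i < size s)%N & (j < size s)%N] /\
       [/\ cwalk c0 s i v != cwalk c0 s i.+1 v,
           cwalk c0 s j v != cwalk c0 s j.+1 v &
           cwalk c0 s i.+1 v - cwalk c0 s i v
             = - (cwalk c0 s j.+1 v - cwalk c0 s j v)]).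
Proof.
move=> Ht [/andP [pc0 hp] Hshort] [i [j [v [[ij il jl] [Hi Hj Hd]]]]].
have [[sym irr] _ _] := Ht.
have pct := last_proper pc0 hp.
have V0 := walk_valid irr sym pc0 hp.
have [s' [p' l' z']] := greedy Ht pct pc0 V0 (erefl _).
have := Hshort s'; rewrite /walkC3 pc0 p' z' => /(_ isT l').
have [/andP [E1 E2]|/andP [E1 E2]] := orP (F4 Hi Hj Hd).
- have h1 := count_nth (P := fun p : coloring V * coloring V => p.2 v == p.1 v + 1) il E1.
  have h2 := count_nth (P := fun p : coloring V * coloring V => p.2 v == p.1 v - 1) jl E2.
  have := lower hp h1 h2; lia.
- have h1 := count_nth (P := fun p : coloring V * coloring V => p.2 v == p.1 v - 1) il E1.
  have h2 := count_nth (P := fun p : coloring V * coloring V => p.2 v == p.1 v + 1) jl E2.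
  have := lower hp h2 h1; lia.
Qed.
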